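(* Every Type $\mathcal A$ affine surface geometry is strongly linearly projectively equivalent to a flat Type $\mathcal A$ affine surface geometry: for every Type $\mathcal A$ connection $\nabla$ on $\mathbb R^2$ there exist a real linear function $L$ and a flat Type $\mathcal A$ connection $\tilde\nabla$ with $\tilde\nabla={}^{-L}\nabla$ (equivalently $\nabla={}^{L}\tilde\nabla$).
   Context: An affine manifold $(M,\nabla)$ is a smooth manifold with a torsion-free connection on $TM$, with Christoffel symbols $\nabla_{\partial_{x^i}}\partial_{x^j}=\Gamma_{ij}^k\partial_{x^k}$. For real constants, $\Gamma(a,b,c,d,e,f)$ denotes the connection on $\mathbb R^2$ whose Christoffel symbols in the standard coordinates $(x^1,x^2)$ are the constants $\Gamma_{11}^1=a$, $\Gamma_{11}^2=b$, $\Gamma_{12}^1=\Gamma_{21}^1=c$, $\Gamma_{12}^2=\Gamma_{21}^2=d$, $\Gamma_{22}^1=e$, $\Gamma_{22}^2=f$; a Type $\mathcal A$ connection (affine surface geometry) is $(\mathbb R^2,\Gamma(a,b,c,d,e,f))$. For $g\in C^\infty(M)$ define ${}^g\nabla_XY:=\nabla_XY+X(g)Y+Y(g)X$. A linear function is $L(x^1,x^2)=a_1x^1+a_2x^2$ with $a_1,a_2\in\mathbb R$; for such $L$, ${}^L\Gamma(a,b,c,d,e,f)=\Gamma(a+2a_1,b,c+a_2,d+a_1,e,f+2a_2)$. Two Type $\mathcal A$ connections $\nabla,\tilde\nabla$ are strongly linearly projectively equivalent if $\tilde\nabla={}^L\nabla$ for some linear function $L$. *)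

(* Defs.v *)
From Stdlib Require Import Reals.
Open Scope R_scope.

Inductive idx := I1 | I2.

(* A Type A connection Gamma(a,b,c,d,e,f): constant Christoffel symbols. *)
Record typeA := mkTypeA { ga : R; gb : R; gc : R; gd : R; ge : R; gf : R }.

(* Christoffel symbols Gamma_{ij}^k (torsion free: symmetric in i j). *)
Definition Gam (G : typeA) (i j k : idx) : R :=
  match i, j, k with
  | I1, I1, I1 => ga G
  | I1, I1, I2 => gb G
  | I1, I2, I1 | I2, I1, I1 => gc G
  | I1, I2, I2 | I2, I1, I2 => gd G
  | I2, I2, I1 => ge G
  | I2, I2, I2 => gf G
  end.

(* Curvature components R(d_i,d_j) d_k = R_{ijk}^l d_l.  Since the
   Christoffel symbols are constant, the derivative terms vanish:
   R_{ijk}^l = sum_m (Gamma_{im}^l Gamma_{jk}^m - Gamma_{jm}^l Gamma_{ik}^m). *)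
Definition curv (G : typeA) (i j k l : idx) : R :=
  (Gam G i I1 l * Gam G j k I1 - Gam G j I1 l * Gam G i k I1)
  + (Gam G i I2 l * Gam G j k I2 - Gam G j I2 l * Gam G i k I2).

Definition flat (G : typeA) : Prop := forall i j k l, curv G i j k l = 0.

(* ^L Gamma for the linear function L(x1,x2) = a1 x1 + a2 x2. *)
Definition linmod (a1 a2 : R) (G : typeA) : typeA :=
  mkTypeA (ga G + 2 * a1) (gb G) (gc G + a2) (gd G + a1) (ge G) (gf G + 2 * a2).

(* Main.v *)
Require Import Defs.
From Stdlib Require Import Reals Lra Psatz.
Open Scope R_scope.

Lemma cubic_root (p q r : R) : exists u, u*u*u + p*(u*u) + q*u + r = 0.
Proof.
  set (PP :=  Rabs p). set (QQ := Rabs q). set (SS := Rabs r).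
  assert (hp1 : - PP <= p <= PP) by (unfold PP; split_Rabs; lra).
  assert (hq : - QQ <= q <= QQ) by (unfold QQ; split_Rabs; lra).
  assert (hr : - SS <= r <= SS) by (unfold SS; split_Rabs; lra).
  assert (hP : 0 <= PP) by apply Rabs_pos.
  assert (hQ : 0 <= QQ) by apply Rabs_pos.
  assert (hS : 0 <= SS) by apply Rabs_pos.
  set (M :=  1 + PP + QQ + SS).
  set (f :=  fun u => u*u*u + p*(u*u) + q*u + r).
  assert (cf : continuity f) by (unfold f; reg).
  assert (hM : 1 <= M) by (unfold M; lra).
  assert (f1 : f (-M) < 0).
  { unfold f. assert (M*M >= M) by nra.
    assert (p*(M*M) <= PP*(M*M)) by nra.
    assert (-q*M <= QQ*M) by nra.
    assert (M*M*M >= M*M*(1+PP+QQ+SS)) by (unfold M at 3; nra).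
    nra. }
  assert (f2 : 0 < f M).
  { unfold f. assert (M*M >= M) by nra.
    assert (p*(M*M) >= -PP*(M*M)) by nra.
    assert (q*M >= -QQ*M) by nra.
    assert (M*M*M >= M*M*(1+PP+QQ+SS)) by (unfold M at 3; nra).
    nra. }
  destruct (IVT f (-M) M cf ltac:(lra) f1 f2) as [z [_ hz]].
  exists z. exact hz.
Qed.

Theorem theorem2p3 (G : typeA) :
  exists (a1 a2 : R) (Gt : typeA), flat Gt /\ Gt = linmod (- a1) (- a2) G.
Proof.
  destruct G as [a b c d e f].
  set (A :=  a - 2*d). set (F := f - 2*c).
  assert (H : exists u v, u*v = b*e /\ u*u + A*u + b*v + b*F = 0
                          /\ v*v + F*v + e*u + A*e = 0).
  { destruct (Req_dec b 0) as [hb|hb].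
    - destruct (Req_dec e 0) as [he|he].
      + exists 0, 0. subst. lra.
      + destruct (cubic_root F (e*A) (e*e*b)) as [v hv].
        set (u := -(v*v + F*v + e*A)/e).
        assert (eu : e*u = -(v*v + F*v + e*A)) by (unfold u; field; auto).
        assert (E1 : u*v = b*e).
        { apply (Rmult_eq_reg_l e); [|auto].
          replace (e*(u*v)) with ((e*u)*v) by ring. rewrite eu. lra. }
        exists u, v. split; [exact E1|]. split; [|nra].
        apply (Rmult_eq_reg_l e); [|auto].
        assert (e*(u*u + A*u + b*v + b*F) = u*(e*u) + A*(e*u) + b*(e*v+e*F)) by ring.
        rewrite H. rewrite eu. subst b.
        destruct (Req_dec v 0) as [hv0|hv0].
        * subst v. assert (hu : u = -A) by (apply (Rmult_eq_reg_l e); [|auto]; lra). rewrite hu. ring.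
        * assert (hz : v*v + F*v + e*A = 0).
          { apply (Rmult_eq_reg_l v); [|auto]. lra. }
          rewrite hz. ring.
    - destruct (cubic_root A (b*F) (b*b*e)) as [u hu].
      set (v := -(u*u + A*u + b*F)/b).
      assert (bv : b*v = -(u*u + A*u + b*F)) by (unfold v; field; auto).
      assert (E1 : u*v = b*e).
      { apply (Rmult_eq_reg_l b); [|auto].
        replace (b*(u*v)) with ((b*v)*u) by ring. rewrite bv. lra. }
      exists u, v. split; [exact E1|]. split; [nra|].
      apply (Rmult_eq_reg_l b); [|auto].
      assert (b*(v*v + F*v + e*u + A*e) = v*(b*v + b*F) + b*e*u + A*b*e) by ring.
      rewrite H. rewrite bv.
      replace (v * (- (u * u + A * u + b * F) + b * F)) with (-(u*(u*v)) - A*(u*v)) by ring.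
      rewrite E1. ring. }
  destruct H as [u [v [E1 [E2 E3]]]].
  exists (d - u), (c - v), (linmod (-(d-u)) (-(c-v)) (mkTypeA a b c d e f)).
  split; [|reflexivity].
  intros i j k l; destruct i, j, k, l; unfold curv, Gam, linmod; simpl;
    unfold A, F in *; nra.
Qed.
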